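(* Let $p$ be a $\mathrm{Beta}(\alpha,\beta)$ random variable with $\alpha\ge1$ and $\beta\ge1$, and let $b$ be distributed, conditionally on $p$, as $\mathrm{Bern}(p)$. Let $\delta=1/m$ for an integer $m\ge 2$ and define $q=\lceil p/\delta\rceil$. Then $$\mathbb{I}(p; b) \geq \mathbb{I}(q; b) \geq \mathbb{I}(p; b) - \max \left \{ 3, \log \frac{1}{\delta} \right \} \delta.$$
   Context: $\mathbb{I}(\cdot;\cdot)$ denotes mutual information (natural logarithm). *)

(* Defs.v *)
From Stdlib Require Import Reals ZArith.
From Coquelicot Require Import Coquelicot.
Open Scope R_scope.

Definition Rceil (x : R) : Z := (- Int_part (- x))%Z.

(* Unnormalized Beta(a,b) kernel x^(a-1) (1-x)^(b-1) on (0,1), 0 outside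
   (values at the endpoints 0,1 are irrelevant for the integrals). *)
Definition beta_kernel (a b : R) (x : R) : R :=
  if Rlt_dec 0 x then if Rlt_dec x 1 then
    Rpower x (a - 1) * Rpower (1 - x) (b - 1) else 0 else 0.

Definition beta_pdf (a b : R) (x : R) : R :=
  beta_kernel a b x / RInt (beta_kernel a b) 0 1.

Definition xlogxy (u v : R) : R := if Req_EM_T u 0 then 0 else u * ln (u / v).

(* P(b = 1) = E[p] for p ~ Beta(a,b), b | p ~ Bern(p). *)
Definition Pb1 (a b : R) : R := RInt (fun x => x * beta_pdf a b x) 0 1.

(* I(p;b) (nats) for the joint law of (p,b) with density
   f(x) P(b=j | p=x) w.r.t. Lebesgue x counting measure:
   I = sum_j int f(x) P(j|x) ln (P(j|x) / P(b=j)) dx. *)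
Definition MI_pb (a b : R) : R :=
  RInt (fun x => beta_pdf a b x *
                 (xlogxy x (Pb1 a b) + xlogxy (1 - x) (1 - Pb1 a b))) 0 1.

Definition qval (m : nat) (x : R) : Z := Rceil (x / (/ INR m)).


Definition Pq_b1 (a b : R) (m : nat) (k : Z) : R :=
  RInt (fun x => beta_pdf a b x * x *
                 (if Z.eq_dec (qval m x) k then 1 else 0)) 0 1.
Definition Pq_b0 (a b : R) (m : nat) (k : Z) : R :=
  RInt (fun x => beta_pdf a b x * (1 - x) *
                 (if Z.eq_dec (qval m x) k then 1 else 0)) 0 1.
Definition Pq (a b : R) (m : nat) (k : Z) : R :=
  RInt (fun x => beta_pdf a b x *
                 (if Z.eq_dec (qval m x) k then 1 else 0)) 0 1.

(* I(q;b) (nats). Since p in [0,1], q = ceil(m p) takes values in {0,...,m}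
   (almost surely in {1,...,m}), so the sum over the support is over k = 0..m. *)
Definition MI_qb (a b : R) (m : nat) : R :=
  sum_f_R0 (fun k =>
     xlogxy (Pq_b1 a b m (Z.of_nat k)) (Pq a b m (Z.of_nat k) * Pb1 a b)
   + xlogxy (Pq_b0 a b m (Z.of_nat k)) (Pq a b m (Z.of_nat k) * (1 - Pb1 a b))) m.

(* Main.v *)
Require Import Defs.
From Stdlib Require Import Reals ZArith Lra Lia.
From Coquelicot Require Import Coquelicot.
Open Scope R_scope.


Lemma ln_le_sub1 t : 0 < t -> ln t <= t - 1.
Proof. intros Ht. generalize (exp_ineq1_le (ln t)). rewrite exp_ln; lra. Qed.

Definition pw (c y : R) : R :=
  if Rlt_dec 0 y then Rpower y c else (if Req_EM_T c 0 then 1 else 0).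

Definition Lt (y : R) : R := if Rlt_dec 0 y then y * ln y else 0.

Lemma cont_pos_ext (f g : R -> R) y : 0 < y ->
  (forall z, 0 < z -> f z = g z) -> continuous g y -> continuous f y.
Proof.
  intros Hy Heq Hc. apply continuous_ext_loc with g; auto.
  exists (mkposreal y Hy). intros z Hz. symmetry; apply Heq.
  change (Rabs (z - y) < y) in Hz. apply Rabs_def2 in Hz. lra.
Qed.

Lemma cont_Rpower c y : 0 < y -> continuous (fun z => Rpower z c) y.
Proof.
  intros Hy. apply (ex_derive_continuous (K:=R_AbsRing) (V:=R_NormedModule)). exists (c * Rpower y (c - 1)).
  apply is_derive_Reals. now apply derivable_pt_lim_power.
Qed.

Lemma pw_cont c y : 0 <= c -> 0 <= y -> continuous (pw c) y.
Proof.
  intros Hc Hy. destruct (Rle_lt_or_eq_dec 0 y Hy) as [Hy'|Hy'].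
  - apply cont_pos_ext with (fun z => Rpower z c); auto.
    + intros z Hz. unfold pw. destruct (Rlt_dec 0 z); [reflexivity|lra].
    + now apply cont_Rpower.
  - subst y. destruct (Req_EM_T c 0) as [Hc0|Hc0].
    + subst c. apply continuous_ext with (fun _ => 1).
      * intros z. unfold pw. destruct (Rlt_dec 0 z).
        -- unfold Rpower. rewrite Rmult_0_l, exp_0. reflexivity.
        -- destruct (Req_EM_T 0 0); [reflexivity|lra].
      * apply continuous_const.
    + assert (Hcp : 0 < c) by lra.
      apply continuity_pt_filterlim.
      intros eps Heps.
      assert (Hv : pw c 0 = 0).
      { unfold pw. destruct (Rlt_dec 0 0); [lra|]. destruct (Req_EM_T c 0); [lra|reflexivity]. }
      exists (Rpower eps (/ c)). split.
      { unfold Rpower. apply exp_pos. }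
      intros z [_ Hz]. unfold dist, R_met in *; simpl dist in *. unfold R_dist in *. rewrite Hv in *. rewrite ?Rminus_0_r in *.
      unfold pw. destruct (Rlt_dec 0 z) as [Hz0|Hz0].
      * rewrite Rabs_right.
        2: { left. unfold Rpower. apply exp_pos. }
        rewrite Rabs_right in Hz by lra.
        apply Rlt_le_trans with (Rpower (Rpower eps (/ c)) c).
        -- apply Rlt_Rpower_l; lra.
        -- rewrite Rpower_mult, Rinv_l by lra. rewrite Rpower_1 by lra. lra.
      * destruct (Req_EM_T c 0); [lra|]. rewrite Rabs_R0. lra.
Qed.

Lemma Lt_cont y : 0 <= y -> continuous Lt y.
Proof.
  intros Hy. destruct (Rle_lt_or_eq_dec 0 y Hy) as [Hy'|Hy'].
  - apply cont_pos_ext with (fun z => z * ln z); auto.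
    + intros z Hz. unfold Lt. destruct (Rlt_dec 0 z); [reflexivity|lra].
    + apply (ex_derive_continuous (K:=R_AbsRing) (V:=R_NormedModule)). auto_derive. lra.
  - subst y. apply continuity_pt_filterlim.
    intros eps Heps.
    assert (Hv : Lt 0 = 0).
    { unfold Lt. destruct (Rlt_dec 0 0); [lra|reflexivity]. }
    exists (Rmin 1 ((eps/2)*(eps/2))). split.
    { apply Rmin_pos; nra. }
    intros z [_ Hz]. unfold dist, R_met in *; simpl dist in *. unfold R_dist in *. rewrite Hv in *. rewrite ?Rminus_0_r in *.
    unfold Lt. destruct (Rlt_dec 0 z) as [Hz0|Hz0].
    + rewrite Rabs_right in Hz by lra.
      assert (Hz1 : z < 1) by (generalize (Rmin_l 1 ((eps/2)*(eps/2))); lra).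
      assert (Hz2 : z < (eps/2)*(eps/2)) by (generalize (Rmin_r 1 ((eps/2)*(eps/2))); lra).
      assert (Hs : 0 < sqrt z) by (apply sqrt_lt_R0; lra).
      assert (Hss : sqrt z * sqrt z = z) by (apply sqrt_sqrt; lra).
      assert (Hsl : sqrt z < eps / 2).
      { apply Rnot_le_lt. intros Hc. assert (eps/2 * (eps/2) <= sqrt z * sqrt z).
        { apply Rmult_le_compat; lra. } lra. }
      assert (Hln : ln z = 2 * ln (sqrt z)).
      { rewrite <- Hss at 1. rewrite ln_mult by lra. ring. }
      assert (Hl1 : ln (sqrt z) >= 1 - / sqrt z).
      { generalize (ln_le_sub1 (/ sqrt z) (Rinv_0_lt_compat _ Hs)). rewrite ln_Rinv by lra. lra. }
      assert (Hneg : ln z < 0).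
      { rewrite <- ln_1. apply ln_increasing; lra. }
      rewrite Rabs_left.
      2: { assert (0 < z * - ln z) by (apply Rmult_lt_0_compat; lra). lra. }
      rewrite Hln.
      assert (z * / sqrt z = sqrt z).
      { rewrite <- Hss at 1. field. lra. }
      assert (z * ln (sqrt z) >= z * (1 - / sqrt z)) by (apply Rmult_ge_compat_l; lra).
      nra.
    + rewrite Rabs_R0. lra.
Qed.

Fixpoint sumr (F : nat -> R) (n : nat) : R :=
  match n with O => 0 | S n => sumr F n + F n end.

Lemma sum_f_R0_sumr t n : sum_f_R0 t n = t O + sumr (fun j => t (S j)) n.
Proof. induction n; simpl; [ring|]. rewrite IHn. ring. Qed.

Lemma sumr_ext F G n : (forall i, (i < n)%nat -> F i = G i) -> sumr F n = sumr G n.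
Proof. induction n; intros H; simpl; auto. rewrite IHn by (intros; apply H; lia). rewrite H by lia. auto. Qed.

Lemma sumr_le F G n : (forall i, (i < n)%nat -> F i <= G i) -> sumr F n <= sumr G n.
Proof. induction n; intros H; simpl; [lra|]. generalize (IHn (fun i Hi => H i ltac:(lia))). generalize (H n ltac:(lia)). lra. Qed.

Lemma sumr_minus F G n : sumr (fun i => F i - G i) n = sumr F n - sumr G n.
Proof. induction n; simpl; [ring|]. rewrite IHn. ring. Qed.

Lemma sumr_scal c F n : sumr (fun i => c * F i) n = c * sumr F n.
Proof. induction n; simpl; [ring|]. rewrite IHn. ring. Qed.

Lemma sumr_delta F n j : (j < n)%nat -> (forall i, (i < n)%nat -> i <> j -> F i = 0) -> sumr F n = F j.
Proof.
  induction n; intros Hj H; simpl; [lia|].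
  destruct (Nat.eq_dec n j) as [->|Hne].
  - rewrite (sumr_ext F (fun _ => 0)). 2:{ intros i Hi; apply H; lia. }
    clear. assert (forall k, sumr (fun _ => 0) k = 0) as -> by (induction k; simpl; lra). ring.
  - rewrite IHn. rewrite (H n). ring. all: try lia. intros i Hi Hij. apply H; lia.
Qed.

Lemma sumr_zero F n : (forall i, (i < n)%nat -> F i = 0) -> sumr F n = 0.
Proof. induction n; intros H; simpl; auto. rewrite IHn, H by (try lia; intros; apply H; lia). ring. Qed.

Definition lo (m j : nat) : R := INR j / INR m.
Definition hi (m j : nat) : R := INR (S j) / INR m.

Lemma cell_bounds m j : (2 <= m)%nat -> (j < m)%nat -> 0 <= lo m j /\ lo m j < hi m j /\ hi m j <= 1
  /\ hi m j - lo m j = / INR m.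
Proof.
  intros Hm Hj. unfold lo, hi. assert (HmR : 2 <= INR m) by (apply (le_INR 2); lia).
  assert (Hj1 : INR (S j) <= INR m) by (apply le_INR; lia).
  rewrite S_INR in *. assert (0 <= INR j) by apply pos_INR.
  repeat split.
  - apply Rdiv_le_0_compat; lra.
  - apply Rmult_lt_compat_r; [apply Rinv_0_lt_compat; lra| lra].
  - apply Rmult_le_reg_r with (INR m); [lra|]. field_simplify; lra.
  - field. lra.
Qed.

Lemma qval_cell m j x : (2 <= m)%nat -> (j < m)%nat -> lo m j < x < hi m j ->
  qval m x = Z.of_nat (S j).
Proof.
  intros Hm Hj [H1 H2]. unfold lo, hi in *. assert (HmR : 2 <= INR m) by (apply (le_INR 2); lia).
  rewrite S_INR in H2.
  assert (Ha : INR j < x * INR m).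
  { apply Rmult_lt_reg_r with (/ INR m). apply Rinv_0_lt_compat; lra.
    rewrite Rmult_assoc, Rinv_r, Rmult_1_r by lra. exact H1. }
  assert (Hb : x * INR m < INR j + 1).
  { apply Rmult_lt_reg_r with (/ INR m). apply Rinv_0_lt_compat; lra.
    rewrite Rmult_assoc, Rinv_r, Rmult_1_r by lra. exact H2. }
  unfold qval, Rceil, Int_part.
  replace (x / / INR m) with (x * INR m) by (field; lra).
  rewrite <- (tech_up (- (x * INR m)) (- Z.of_nat j)).
  - rewrite Nat2Z.inj_succ. lia.
  - rewrite opp_IZR, <- INR_IZR_INZ. lra.
  - rewrite opp_IZR, <- INR_IZR_INZ. lra.
Qed.

Lemma split_sum (H : R -> R) m : (1 <= m)%nat ->
  (forall j, (j < m)%nat -> ex_RInt H (lo m j) (hi m j)) ->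
  RInt H 0 1 = sumr (fun j => RInt H (lo m j) (hi m j)) m.
Proof.
  intros Hm Hex.
  assert (Main : forall n, (n <= m)%nat -> ex_RInt H 0 (INR n / INR m) /\
     RInt H 0 (INR n / INR m) = sumr (fun j => RInt H (lo m j) (hi m j)) n).
  { induction n; intros Hn.
    - simpl. replace (0 / INR m) with 0 by (unfold Rdiv; ring). split.
      + apply ex_RInt_point.
      + apply (RInt_point (V:=R_CompleteNormedModule)).
    - destruct (IHn ltac:(lia)) as [He Hr]. specialize (Hex n ltac:(lia)).
      unfold lo, hi in Hex. split.
      + eapply ex_RInt_Chasles; eauto.
      + rewrite <- (RInt_Chasles H 0 (INR n / INR m)); auto. simpl sumr. rewrite <- Hr. reflexivity. }
  destruct (Main m ltac:(lia)) as [_ Hr]. rewrite <- Hr. f_equal.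
  field. apply not_0_INR. lia.
Qed.

Definition C01 (g : R -> R) := forall x, 0 <= x <= 1 -> continuous g x.

Lemma C01_ex g l h : C01 g -> 0 <= l -> l <= h -> h <= 1 -> ex_RInt g l h.
Proof.
  intros Hg H1 H2 H3. apply (ex_RInt_continuous (V:=R_CompleteNormedModule)). intros z Hz. apply Hg.
  rewrite Rmin_left, Rmax_right in Hz by lra. lra.
Qed.

Lemma cell_val (H g : R -> R) l h : C01 g -> 0 <= l -> l < h -> h <= 1 ->
  (forall x, l < x < h -> H x = g x) -> ex_RInt H l h /\ RInt H l h = RInt g l h.
Proof.
  intros Hg H1 H2 H3 He. assert (He' : forall x, Rmin l h < x < Rmax l h -> g x = H x).
  { rewrite Rmin_left, Rmax_right by lra. intros; symmetry; auto. }
  split.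
  - eapply ex_RInt_ext. apply He'. apply C01_ex; [exact Hg|lra|lra|lra].
  - symmetry. apply RInt_ext. exact He'.
Qed.

Lemma isR_plus (f g : R -> R) (a b If Ig : R) : is_RInt f a b If -> is_RInt g a b Ig ->
  is_RInt (fun x => f x + g x) a b (If + Ig).
Proof. intros H1 H2. exact (is_RInt_plus (V:=R_NormedModule) f g a b If Ig H1 H2). Qed.
Lemma isR_minus (f g : R -> R) (a b If Ig : R) : is_RInt f a b If -> is_RInt g a b Ig ->
  is_RInt (fun x => f x - g x) a b (If - Ig).
Proof. intros H1 H2. exact (is_RInt_minus (V:=R_NormedModule) f g a b If Ig H1 H2). Qed.
Lemma isR_scal (c : R) (f : R -> R) (a b If : R) : is_RInt f a b If -> is_RInt (fun x => c * f x) a b (c * If).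
Proof. intros H1. exact (is_RInt_scal (V:=R_NormedModule) f a b c If H1). Qed.
Lemma isR_uniq (f : R -> R) (a b l : R) : is_RInt f a b l -> RInt f a b = l.
Proof. intros H. exact (is_RInt_unique (V:=R_CompleteNormedModule) f a b l H). Qed.
Lemma isR_corr (f : R -> R) (a b : R) : ex_RInt f a b -> is_RInt f a b (RInt f a b).
Proof. intros H. exact (RInt_correct (V:=R_CompleteNormedModule) f a b H). Qed.
Lemma isR_ext (f g : R -> R) (a b l : R) : a <= b -> (forall x, a < x < b -> f x = g x) -> is_RInt f a b l -> is_RInt g a b l.
Proof. intros Hab H. apply is_RInt_ext. rewrite Rmin_left, Rmax_right by lra. exact H. Qed.

Lemma C01_mult f g : C01 f -> C01 g -> C01 (fun x => f x * g x).
Proof. intros Hf Hg x Hx. exact (continuous_mult (K:=R_AbsRing) f g x (Hf x Hx) (Hg x Hx)). Qed.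
Lemma C01_plus f g : C01 f -> C01 g -> C01 (fun x => f x + g x).
Proof. intros Hf Hg x Hx. exact (continuous_plus (V:=R_NormedModule) f g x (Hf x Hx) (Hg x Hx)). Qed.
Lemma C01_minus f g : C01 f -> C01 g -> C01 (fun x => f x - g x).
Proof. intros Hf Hg x Hx. exact (continuous_minus (V:=R_NormedModule) f g x (Hf x Hx) (Hg x Hx)). Qed.
Lemma C01_const c : C01 (fun _ => c).
Proof. intros x Hx. apply continuous_const. Qed.
Lemma C01_id : C01 (fun x => x).
Proof. intros x Hx. apply continuous_id. Qed.
Lemma C01_refl g : C01 g -> C01 (fun x => g (1 - x)).
Proof.
  intros Hg x Hx. apply (continuous_comp (fun x => 1 - x) g).
  - apply (C01_minus (fun _ => 1) (fun x => x)); [apply C01_const|apply C01_id|exact Hx].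
  - apply Hg; lra.
Qed.

Definition Kt (a b x : R) : R := pw (a - 1) x * pw (b - 1) (1 - x).

Lemma Kt_C01 a b : 1 <= a -> 1 <= b -> C01 (Kt a b).
Proof.
  intros Ha Hb. unfold Kt. apply C01_mult.
  - intros x Hx. apply pw_cont; lra.
  - apply (C01_refl (pw (b - 1))). intros x Hx. apply pw_cont; lra.
Qed.

Lemma Kt_eq a b x : 0 < x < 1 -> beta_kernel a b x = Kt a b x.
Proof.
  intros Hx. unfold beta_kernel, Kt, pw.
  destruct (Rlt_dec 0 x); [|lra]. destruct (Rlt_dec x 1); [|lra].
  destruct (Rlt_dec 0 (1 - x)); [|lra]. reflexivity.
Qed.

Lemma Kt_pos a b x : 0 < x < 1 -> 0 < Kt a b x.
Proof.
  intros Hx. rewrite <- Kt_eq by auto. unfold beta_kernel.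
  destruct (Rlt_dec 0 x); [|lra]. destruct (Rlt_dec x 1); [|lra].
  unfold Rpower. apply Rmult_lt_0_compat; apply exp_pos.
Qed.

Lemma Lt_C01 : C01 Lt.
Proof. intros x Hx. apply Lt_cont; lra. Qed.

Lemma Lt_eq x : 0 < x -> Lt x = x * ln x.
Proof. intros H. unfold Lt. destruct (Rlt_dec 0 x); [reflexivity|lra]. Qed.

Lemma core x r : 0 < x < 1 -> 0 < r < 1 ->
  x * ln r + (1 - x) * ln (1 - r) <= x * ln x + (1 - x) * ln (1 - x) /\
  x * ln x + (1 - x) * ln (1 - x) <= x * ln r + (1 - x) * ln (1 - r) + (x - r) * (x - r) / (r * (1 - r)).
Proof.
  intros Hx Hr.
  assert (H1 := ln_le_sub1 (r / x) ltac:(apply Rdiv_lt_0_compat; lra)).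
  assert (H2 := ln_le_sub1 ((1 - r) / (1 - x)) ltac:(apply Rdiv_lt_0_compat; lra)).
  assert (H3 := ln_le_sub1 (x / r) ltac:(apply Rdiv_lt_0_compat; lra)).
  assert (H4 := ln_le_sub1 ((1 - x) / (1 - r)) ltac:(apply Rdiv_lt_0_compat; lra)).
  rewrite ln_div in H1, H2, H3, H4 by lra.
  assert (E1 : x * (r / x - 1) = r - x) by (field; lra).
  assert (E2 : (1 - x) * ((1 - r) / (1 - x) - 1) = x - r) by (field; lra).
  assert (E3 : x * (x / r - 1) + (1 - x) * ((1 - x) / (1 - r) - 1) = (x - r) * (x - r) / (r * (1 - r))) by (field; lra).
  split.
  - assert (x * (ln r - ln x) <= x * (r / x - 1)) by (apply Rmult_le_compat_l; lra).
    assert ((1 - x) * (ln (1 - r) - ln (1 - x)) <= (1 - x) * ((1 - r) / (1 - x) - 1)) by (apply Rmult_le_compat_l; lra).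
    lra.
  - assert (x * (ln x - ln r) <= x * (x / r - 1)) by (apply Rmult_le_compat_l; lra).
    assert ((1 - x) * (ln (1 - x) - ln (1 - r)) <= (1 - x) * ((1 - x) / (1 - r) - 1)) by (apply Rmult_le_compat_l; lra).
    lra.
Qed.

Lemma E_bound l h r : 0 <= l -> l <= r -> r <= h -> h <= 1 -> 0 < r < 1 ->
  (h - r) * (r - l) / (r * (1 - r)) <= 2 * (h - l).
Proof.
  intros. apply Rmult_le_reg_r with (r * (1 - r)). nra.
  unfold Rdiv. rewrite Rmult_assoc, Rinv_l, Rmult_1_r by nra.
  destruct (Rle_dec r (1/2)).
  - assert ((h - r) * (r - l) <= (h - l) * r) by (apply Rmult_le_compat; lra).
    assert ((h - l) * r <= 2 * (h - l) * (r * (1 - r))).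
    { replace (2 * (h - l) * (r * (1 - r))) with ((h - l) * r * (2 * (1 - r))) by ring.
      rewrite <- (Rmult_1_r ((h - l) * r)) at 1. apply Rmult_le_compat_l; [|lra]. nra. }
    lra.
  - assert ((h - r) * (r - l) <= (1 - r) * (h - l)) by (apply Rmult_le_compat; lra).
    assert ((1 - r) * (h - l) <= 2 * (h - l) * (r * (1 - r))).
    { replace (2 * (h - l) * (r * (1 - r))) with ((1 - r) * (h - l) * (2 * r)) by ring.
      rewrite <- (Rmult_1_r ((1 - r) * (h - l))) at 1. apply Rmult_le_compat_l; [|lra]. nra. }
    lra.
Qed.

Lemma cell_main (ft : R -> R) (P l h w mu nu : R) :
  C01 ft -> (forall x, 0 < x < 1 -> 0 <= ft x) ->
  0 <= l -> l < h -> h <= 1 -> 0 < P < 1 ->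
  RInt ft l h = w -> RInt (fun x => x * ft x) l h = mu ->
  RInt (fun x => (1 - x) * ft x) l h = nu -> 0 < mu -> 0 < nu ->
  0 <= RInt (fun x => ft x * (Lt x - x * ln P + (Lt (1 - x) - (1 - x) * ln (1 - P)))) l h
       - (xlogxy mu (w * P) + xlogxy nu (w * (1 - P))) <= 2 * (h - l) * w.
Proof.
  intros Hc Hpos Hl Hlh Hh HP Hw Hmu Hnu Hmu0 Hnu0.
  assert (Cx : C01 (fun x => x * ft x)) by (apply C01_mult; [apply C01_id|exact Hc]).
  assert (C1x : C01 (fun x => (1 - x) * ft x)) by (apply C01_mult; [apply C01_minus; [apply C01_const|apply C01_id]|exact Hc]).
  assert (Iw : is_RInt ft l h w) by (rewrite <- Hw; apply isR_corr, C01_ex; auto; lra).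
  assert (Imu : is_RInt (fun x => x * ft x) l h mu) by (rewrite <- Hmu; apply isR_corr, C01_ex; auto; lra).
  assert (Inu : is_RInt (fun x => (1 - x) * ft x) l h nu) by (rewrite <- Hnu; apply isR_corr, C01_ex; auto; lra).
  assert (Hnuw : nu = w - mu).
  { rewrite <- Hnu. apply isR_uniq. eapply isR_ext; [lra| |apply (isR_minus _ _ _ _ _ _ Iw Imu)].
    intros; simpl; ring. }
  assert (Hw0 : 0 < w) by lra.
  set (r := mu / w).
  assert (Hr1 : 1 - r = nu / w) by (unfold r; rewrite Hnuw; field; lra).
  assert (Hr0 : 0 < r) by (unfold r; apply Rdiv_lt_0_compat; lra).
  assert (Hr0' : 0 < 1 - r) by (rewrite Hr1; apply Rdiv_lt_0_compat; lra).
  assert (Hlr : l <= r).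
  { unfold r. apply Rmult_le_reg_r with w; [lra|]. unfold Rdiv. rewrite Rmult_assoc, Rinv_l, Rmult_1_r by lra.
    rewrite <- (isR_uniq _ _ _ _ (isR_scal l _ _ _ _ Iw)), <- Hmu.
    apply RInt_le; [lra| eexists; apply (isR_scal l _ _ _ _ Iw) | apply C01_ex; auto; lra |].
    intros x Hx. apply Rmult_le_compat_r; [apply Hpos; lra|lra]. }
  assert (Hrh : r <= h).
  { unfold r. apply Rmult_le_reg_r with w; [lra|]. unfold Rdiv. rewrite Rmult_assoc, Rinv_l, Rmult_1_r by lra.
    rewrite <- (isR_uniq _ _ _ _ (isR_scal h _ _ _ _ Iw)), <- Hmu.
    apply RInt_le; [lra| apply C01_ex; auto; lra | eexists; apply (isR_scal h _ _ _ _ Iw) |].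
    intros x Hx. apply Rmult_le_compat_r; [apply Hpos; lra|lra]. }
  set (A := ln r - ln P). set (Cc := ln (1 - r) - ln (1 - P)).
  set (E := (h - r) * (r - l) / (r * (1 - r))). set (D := (h + l - 2 * r) / (r * (1 - r))).
  set (fG := fun x => ft x * (Lt x - x * ln P + (Lt (1 - x) - (1 - x) * ln (1 - P)))).
  assert (CG : C01 fG).
  { unfold fG. apply C01_mult; [exact Hc|]. apply C01_plus; apply C01_minus.
    - apply Lt_C01.
    - apply C01_mult; [apply C01_id|apply C01_const].
    - apply (C01_refl Lt Lt_C01).
    - apply C01_mult; [apply C01_minus; [apply C01_const|apply C01_id]|apply C01_const]. }
  assert (Ilow : is_RInt (fun x => A * (x * ft x) + Cc * ((1 - x) * ft x)) l h (A * mu + Cc * nu)).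
  { apply isR_plus; apply isR_scal; assumption. }
  assert (Iup : is_RInt (fun x => (A * (x * ft x) + Cc * ((1 - x) * ft x)) + (E * ft x + D * (x * ft x - r * ft x))) l h
                   ((A * mu + Cc * nu) + (E * w + D * (mu - r * w)))).
  { apply isR_plus; [exact Ilow|]. apply isR_plus; apply isR_scal; [exact Iw|].
    apply isR_minus; [exact Imu|]. apply isR_scal; exact Iw. }
  assert (Ht : xlogxy mu (w * P) + xlogxy nu (w * (1 - P)) = A * mu + Cc * nu).
  { unfold xlogxy. destruct (Req_EM_T mu 0); [lra|]. destruct (Req_EM_T nu 0); [lra|].
    unfold A, Cc. rewrite <- !ln_div by lra.
    replace (mu / (w * P)) with (r / P) by (unfold r; field; lra).
    replace (nu / (w * (1 - P))) with ((1 - r) / (1 - P)) by (rewrite Hr1; field; lra).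
    ring. }
  assert (Hmr : mu - r * w = 0) by (unfold r; field; lra).
  rewrite Hmr, Rmult_0_r, Rplus_0_r in Iup.
  change (RInt (fun x => ft x * (Lt x - x * ln P + (Lt (1 - x) - (1 - x) * ln (1 - P)))) l h) with (RInt fG l h).
  rewrite Ht. split.
  - rewrite <- (isR_uniq _ _ _ _ Ilow).
    assert (RInt (fun x => A * (x * ft x) + Cc * ((1 - x) * ft x)) l h <= RInt fG l h); [|lra].
    apply RInt_le; [lra|eexists; exact Ilow|apply C01_ex; auto; lra|].
    intros x Hx. assert (Hx01 : 0 < x < 1) by lra.
    assert (Hr01 : 0 < r < 1) by lra; destruct (core x r Hx01 Hr01) as [Hc1 _].
    unfold fG. rewrite !Lt_eq by lra.
    replace (A * (x * ft x) + Cc * ((1 - x) * ft x)) with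
      (ft x * ((x * ln r + (1 - x) * ln (1 - r)) - x * ln P - (1 - x) * ln (1 - P))) by (unfold A, Cc; ring).
    replace (x * ln x - x * ln P + ((1 - x) * ln (1 - x) - (1 - x) * ln (1 - P))) with
      ((x * ln x + (1 - x) * ln (1 - x)) - x * ln P - (1 - x) * ln (1 - P)) by ring.
    apply Rmult_le_compat_l; [apply Hpos; lra|lra].
  - assert (HE : E * w <= 2 * (h - l) * w).
    { apply Rmult_le_compat_r; [lra|]. apply E_bound; lra. }
    assert (RInt fG l h <= RInt (fun x => (A * (x * ft x) + Cc * ((1 - x) * ft x)) + (E * ft x + D * (x * ft x - r * ft x))) l h); [|rewrite (isR_uniq _ _ _ _ Iup) in *; lra].
    apply RInt_le; [lra|apply C01_ex; auto; lra|eexists; exact Iup|].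
    intros x Hx. assert (Hx01 : 0 < x < 1) by lra.
    assert (Hr01 : 0 < r < 1) by lra; destruct (core x r Hx01 Hr01) as [_ Hc2].
    unfold fG. rewrite !Lt_eq by lra.
    assert (Hq : (x - r) * (x - r) / (r * (1 - r)) <= E + D * (x - r)).
    { assert (Heq : E + D * (x - r) - (x - r) * (x - r) / (r * (1 - r)) = (h - x) * (x - l) / (r * (1 - r)))
        by (unfold E, D; field; lra).
      assert (0 <= (h - x) * (x - l) / (r * (1 - r))).
      { apply Rdiv_le_0_compat; [apply Rmult_le_pos; lra | nra]. }
      lra. }
    replace ((A * (x * ft x) + Cc * ((1 - x) * ft x)) + (E * ft x + D * (x * ft x - r * ft x))) with
      (ft x * ((x * ln r + (1 - x) * ln (1 - r) + (E + D * (x - r))) - x * ln P - (1 - x) * ln (1 - P))) by (unfold A, Cc; ring).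
    replace (x * ln x - x * ln P + ((1 - x) * ln (1 - x) - (1 - x) * ln (1 - P))) with
      ((x * ln x + (1 - x) * ln (1 - x)) - x * ln P - (1 - x) * ln (1 - P)) by ring.
    apply Rmult_le_compat_l; [apply Hpos; lra|lra].
Qed.

Lemma RInt_zero l h : RInt (fun _ => 0) l h = 0.
Proof. rewrite RInt_const. unfold scal; simpl. unfold mult; simpl. ring. Qed.

Lemma cell_zero (H : R -> R) l h : 0 <= l -> l < h -> h <= 1 ->
  (forall x, l < x < h -> H x = 0) -> ex_RInt H l h /\ RInt H l h = 0.
Proof.
  intros H1 H2 H3 He. destruct (cell_val H (fun _ => 0) l h (C01_const 0) H1 H2 H3 He) as [E1 E2].
  split; [exact E1|rewrite E2; apply RInt_zero].
Qed.

Lemma ind_hit m j (F g : R -> R) : (2 <= m)%nat -> (j < m)%nat -> C01 g ->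
  (forall x, 0 < x < 1 -> F x = g x) ->
  RInt (fun x => F x * (if Z.eq_dec (qval m x) (Z.of_nat (S j)) then 1 else 0)) 0 1
  = RInt g (lo m j) (hi m j).
Proof.
  intros Hm Hj Hg HF.
  assert (Hcell : forall i, (i < m)%nat ->
    ex_RInt (fun x => F x * (if Z.eq_dec (qval m x) (Z.of_nat (S j)) then 1 else 0)) (lo m i) (hi m i) /\
    RInt (fun x => F x * (if Z.eq_dec (qval m x) (Z.of_nat (S j)) then 1 else 0)) (lo m i) (hi m i)
    = if Nat.eq_dec i j then RInt g (lo m j) (hi m j) else 0).
  { intros i Hi. destruct (cell_bounds m i Hm Hi) as (B1 & B2 & B3 & B4).
    destruct (Nat.eq_dec i j) as [->|Hne].
    - apply cell_val; auto. intros x Hx. rewrite (qval_cell m j x Hm Hi Hx).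
      destruct (Z.eq_dec _ _); [|congruence]. rewrite Rmult_1_r. apply HF; lra.
    - apply cell_zero; auto.
      intros x Hx. rewrite (qval_cell m i x Hm Hi Hx).
      destruct (Z.eq_dec _ _) as [e|]; [apply Nat2Z.inj in e; lia|]. ring. }
  rewrite (split_sum _ m) by (try lia; intros i Hi; apply (Hcell i Hi)).
  rewrite (sumr_delta _ m j Hj).
  - destruct (Hcell j Hj) as [_ ->]. destruct (Nat.eq_dec j j); [reflexivity|lia].
  - intros i Hi Hne. destruct (Hcell i Hi) as [_ ->]. destruct (Nat.eq_dec i j); [lia|reflexivity].
Qed.

Lemma ind_zero m (F g : R -> R) : (2 <= m)%nat -> C01 g ->
  (forall x, 0 < x < 1 -> F x = g x) ->
  RInt (fun x => F x * (if Z.eq_dec (qval m x) (Z.of_nat O) then 1 else 0)) 0 1 = 0.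
Proof.
  intros Hm Hg HF.
  assert (Hcell : forall i, (i < m)%nat ->
    ex_RInt (fun x => F x * (if Z.eq_dec (qval m x) (Z.of_nat O) then 1 else 0)) (lo m i) (hi m i) /\
    RInt (fun x => F x * (if Z.eq_dec (qval m x) (Z.of_nat O) then 1 else 0)) (lo m i) (hi m i) = 0).
  { intros i Hi. destruct (cell_bounds m i Hm Hi) as (B1 & B2 & B3 & B4).
    apply cell_zero; auto.
    intros x Hx. rewrite (qval_cell m i x Hm Hi Hx).
    destruct (Z.eq_dec _ _) as [e|]; [apply Nat2Z.inj in e; lia|]. ring. }
  rewrite (split_sum _ m) by (try lia; intros i Hi; apply (Hcell i Hi)).
  apply sumr_zero. intros i Hi. apply (Hcell i Hi).
Qed.

Theorem lemma7 (a b : R) (m : nat) :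
  1 <= a -> 1 <= b -> (2 <= m)%nat ->
  let delta := / INR m in
  MI_qb a b m <= MI_pb a b /\
  MI_pb a b - Rmax 3 (ln (/ delta)) * delta <= MI_qb a b m.
Proof.
  intros Ha Hb Hm delta.
  assert (HmR : 2 <= INR m) by (apply (le_INR 2); lia).
  assert (Hd : 0 < delta) by (unfold delta; apply Rinv_0_lt_compat; lra).
  set (Bv := RInt (beta_kernel a b) 0 1).
  assert (KC := Kt_C01 a b Ha Hb).
  assert (HB : Bv = RInt (Kt a b) 0 1).
  { apply RInt_ext. rewrite Rmin_left, Rmax_right by lra. apply Kt_eq. }
  assert (HB0 : 0 < Bv).
  { rewrite HB. apply RInt_gt_0; [lra| |]. intros; apply Kt_pos; lra. intros; apply KC; lra. }
  set (ft := fun x => Kt a b x * / Bv).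
  assert (Cf : C01 ft) by (apply C01_mult; [exact KC|apply C01_const]).
  assert (fpos : forall x, 0 < x < 1 -> 0 < ft x).
  { intros x Hx. unfold ft. apply Rmult_lt_0_compat; [apply Kt_pos; lra|apply Rinv_0_lt_compat; lra]. }
  assert (fge : forall x, 0 < x < 1 -> 0 <= ft x) by (intros x Hx; left; auto).
  assert (Hpdf : forall x, 0 < x < 1 -> beta_pdf a b x = ft x).
  { intros x Hx. unfold beta_pdf, ft. rewrite Kt_eq by auto. reflexivity. }
  assert (Cx : C01 (fun x => x * ft x)) by (apply C01_mult; [apply C01_id|exact Cf]).
  assert (C1x : C01 (fun x => (1 - x) * ft x)) by (apply C01_mult; [apply C01_minus; [apply C01_const|apply C01_id]|exact Cf]).
  assert (If1 : is_RInt ft 0 1 1).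
  { replace 1 with (/ Bv * Bv) at 2 by (field; lra).
    eapply isR_ext; [lra| |apply isR_scal; rewrite HB; apply isR_corr, C01_ex; auto; lra].
    intros x _. unfold ft. ring. }
  set (P := Pb1 a b).
  assert (HP : P = RInt (fun x => x * ft x) 0 1).
  { unfold P, Pb1. apply RInt_ext. rewrite Rmin_left, Rmax_right by lra. intros x Hx. rewrite Hpdf by auto. reflexivity. }
  assert (HP0 : 0 < P).
  { rewrite HP. apply RInt_gt_0; [lra| |]. intros; apply Rmult_lt_0_compat; [lra|apply fpos; lra]. intros; apply Cx; lra. }
  assert (HP1 : 0 < 1 - P).
  { assert (1 - P = RInt (fun x => (1 - x) * ft x) 0 1).
    { symmetry. apply isR_uniq. rewrite HP. eapply isR_ext; [lra| |apply isR_minus; [exact If1|apply isR_corr, C01_ex; auto; lra]].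
      intros; cbv beta; ring. }
    rewrite H. apply RInt_gt_0; [lra| |]. intros; apply Rmult_lt_0_compat; [lra|apply fpos; lra]. intros; apply C1x; lra. }
  set (fG := fun x => ft x * (Lt x - x * ln P + (Lt (1 - x) - (1 - x) * ln (1 - P)))).
  assert (CG : C01 fG).
  { unfold fG. apply C01_mult; [exact Cf|]. apply C01_plus; apply C01_minus.
    - apply Lt_C01.
    - apply C01_mult; [apply C01_id|apply C01_const].
    - apply (C01_refl Lt Lt_C01).
    - apply C01_mult; [apply C01_minus; [apply C01_const|apply C01_id]|apply C01_const]. }
  assert (HGeq : forall x, 0 < x < 1 -> beta_pdf a b x * (xlogxy x P + xlogxy (1 - x) (1 - P)) = fG x).
  { intros x Hx. rewrite Hpdf by auto. unfold xlogxy, fG.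
    destruct (Req_EM_T x 0); [lra|]. destruct (Req_EM_T (1 - x) 0); [lra|].
    rewrite !Lt_eq by lra. rewrite !ln_div by lra. ring. }
  assert (HMIp : MI_pb a b = sumr (fun j => RInt fG (lo m j) (hi m j)) m).
  { assert (Hc : forall j, (j < m)%nat ->
      ex_RInt (fun x => beta_pdf a b x * (xlogxy x P + xlogxy (1 - x) (1 - P))) (lo m j) (hi m j) /\
      RInt (fun x => beta_pdf a b x * (xlogxy x P + xlogxy (1 - x) (1 - P))) (lo m j) (hi m j) = RInt fG (lo m j) (hi m j)).
    { intros j Hj. destruct (cell_bounds m j Hm Hj) as (B1 & B2 & B3 & B4).
      apply cell_val; auto. intros x Hx. apply HGeq. lra. }
    unfold MI_pb. fold P. rewrite (split_sum _ m) by (try lia; intros j Hj; apply (Hc j Hj)).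
    apply sumr_ext. intros j Hj. apply (Hc j Hj). }
  set (T := fun j => xlogxy (RInt (fun x => x * ft x) (lo m j) (hi m j)) (RInt ft (lo m j) (hi m j) * P)
                   + xlogxy (RInt (fun x => (1 - x) * ft x) (lo m j) (hi m j)) (RInt ft (lo m j) (hi m j) * (1 - P))).
  assert (HMIq : MI_qb a b m = sumr T m).
  { unfold MI_qb. rewrite sum_f_R0_sumr.
    assert (Z1 : Pq_b1 a b m (Z.of_nat 0) = 0).
    { unfold Pq_b1. apply (ind_zero m (fun x => beta_pdf a b x * x) (fun x => x * ft x)); auto.
      intros x Hx. rewrite Hpdf by auto. ring. }
    assert (Z2 : Pq_b0 a b m (Z.of_nat 0) = 0).
    { unfold Pq_b0. apply (ind_zero m (fun x => beta_pdf a b x * (1 - x)) (fun x => (1 - x) * ft x)); auto.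
      intros x Hx. rewrite Hpdf by auto. ring. }
    rewrite Z1, Z2. unfold xlogxy at 1 2. destruct (Req_EM_T 0 0); [|lra]. rewrite !Rplus_0_l.
    apply sumr_ext. intros j Hj. unfold T.
    assert (W1 : Pq_b1 a b m (Z.of_nat (S j)) = RInt (fun x => x * ft x) (lo m j) (hi m j)).
    { unfold Pq_b1. apply (ind_hit m j (fun x => beta_pdf a b x * x) (fun x => x * ft x)); auto.
      intros x Hx. rewrite Hpdf by auto. ring. }
    assert (W2 : Pq_b0 a b m (Z.of_nat (S j)) = RInt (fun x => (1 - x) * ft x) (lo m j) (hi m j)).
    { unfold Pq_b0. apply (ind_hit m j (fun x => beta_pdf a b x * (1 - x)) (fun x => (1 - x) * ft x)); auto.
      intros x Hx. rewrite Hpdf by auto. ring. }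
    assert (W0 : Pq a b m (Z.of_nat (S j)) = RInt ft (lo m j) (hi m j)).
    { unfold Pq. apply (ind_hit m j (beta_pdf a b) ft); auto. }
    rewrite W1, W2, W0. reflexivity. }
  assert (Hcell : forall j, (j < m)%nat ->
     0 <= RInt fG (lo m j) (hi m j) - T j <= 2 * delta * RInt ft (lo m j) (hi m j)).
  { intros j Hj. destruct (cell_bounds m j Hm Hj) as (B1 & B2 & B3 & B4).
    unfold delta. rewrite <- B4. unfold T, fG.
    apply cell_main; auto; try lra.
    - apply RInt_gt_0; [lra| |]. intros; apply Rmult_lt_0_compat; [lra|apply fpos; lra]. intros; apply Cx; lra.
    - apply RInt_gt_0; [lra| |]. intros; apply Rmult_lt_0_compat; [lra|apply fpos; lra]. intros; apply C1x; lra. }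
  assert (Hsum1 : sumr (fun j => RInt ft (lo m j) (hi m j)) m = 1).
  { rewrite <- (split_sum ft m) by (try lia; intros j Hj; destruct (cell_bounds m j Hm Hj) as (B1 & B2 & B3 & B4);
      apply C01_ex; auto; lra).
    apply isR_uniq. exact If1. }
  assert (Hdiff : MI_pb a b - MI_qb a b m = sumr (fun j => RInt fG (lo m j) (hi m j) - T j) m).
  { rewrite HMIp, HMIq, sumr_minus. reflexivity. }
  assert (Lo : 0 <= MI_pb a b - MI_qb a b m).
  { rewrite Hdiff. rewrite <- (sumr_zero (fun _ => 0) m) by auto. apply sumr_le. intros j Hj. apply Hcell; auto. }
  assert (Up : MI_pb a b - MI_qb a b m <= 2 * delta).
  { rewrite Hdiff. rewrite <- (Rmult_1_r (2 * delta)), <- Hsum1, <- sumr_scal. apply sumr_le. intros j Hj. apply Hcell; auto. }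
  assert (Hmax : 3 <= Rmax 3 (ln (/ delta))) by apply Rmax_l.
  split; [lra|].
  assert (3 * delta <= Rmax 3 (ln (/ delta)) * delta) by (apply Rmult_le_compat_r; lra).
  lra.
Qed.
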